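(* For every ProbNetKAT program $p$, every input $a\subseteq\mathsf{Pk}$ and every set $A\subseteq 2^{\mathsf{Pk}}$, \[ [\![p^*]\!](a)(A) = \lim_{n\to\infty}[\![p^{(n)}]\!](a)(A). \]
   Context: Fix finitely many fields each ranging over a finite set of naturals; a packet $\pi$ assigns a value $\pi.f$ to each field $f$, $\pi[f:=n]$ updates field $f$; $\mathsf{Pk}$ is the finite set of packets. ProbNetKAT predicates: $t::=\mathsf{false}\mid\mathsf{true}\mid f=n\mid t\,\&\,u\mid t;u\mid\neg t$; programs: $p::=t\mid f\leftarrow n\mid p\,\&\,q\mid p;q\mid p\oplus_r q\mid p^*$ ($r\in[0,1]\cap\mathbb{Q}$). $p^{(0)}=\mathsf{true}$, $p^{(n+1)}=\mathsf{true}\,\&\,(p;p^{(n)})$. Denotational semantics $[\![p]\!]:2^{\mathsf{Pk}}\to\mathcal{D}(2^{\mathsf{Pk}})$, where $\mathcal{D}(X)$ is the set of probability distributions on finite $X$, $\delta_x$ is Dirac, $\mathcal{D}(g)(\mu)=\mu\circ g^{-1}$, $g^\dagger(\mu)(A)=\sum_x g(x)(A)\mu(x)$, $\mu\times\nu$ product, and $\mu\sqsubseteq\nu$ iff $\mu(\{b:c\subseteq b\})\le\nu(\{b:c\subseteq b\})$ for all $c\subseteq\mathsf{Pk}$: $[\![\mathsf{false}]\!](a)=\delta_\emptyset$; $[\![\mathsf{true}]\!](a)=\delta_a$; $[\![f=n]\!](a)=\delta_{\{\pi\in a:\pi.f=n\}}$; $[\![f\leftarrow n]\!](a)=\delta_{\{\pi[f:=n]:\pi\in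 a\}}$; $[\![\neg t]\!](a)=\mathcal{D}(\lambda b.a-b)([\![t]\!](a))$; $[\![p\,\&\,q]\!](a)=\mathcal{D}(\cup)([\![p]\!](a)\times[\![q]\!](a))$; $[\![p;q]\!](a)=[\![q]\!]^\dagger([\![p]\!](a))$; $[\![p\oplus_r q]\!](a)=r[\![p]\!](a)+(1-r)[\![q]\!](a)$; $[\![p^*]\!](a)=\bigsqcup_n[\![p^{(n)}]\!](a)$, the $\sqsubseteq$-supremum of the increasing chain $([\![p^{(n)}]\!](a))_n$. *)

(* Defs.v *)
From HB Require Import structures.
From mathcomp Require Import all_boot all_order all_algebra.
From mathcomp Require Import all_classical all_reals all_analysis.
From Stdlib Require Import ClassicalEpsilon.
Set Implicit Arguments. Unset Strict Implicit. Unset Printing Implicit Defensive.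
Import Order.TTheory GRing.Theory Num.Theory.
Local Open Scope ring_scope.

Section ProbNetKAT.
(* finitely many fields [F]; field [f] ranges over the naturals {0,...,bnd f - 1} *)
Variable F : finType.
Variable bnd : F -> nat.

Definition Pk : finType := {dffun forall f : F, 'I_(bnd f)}.

Definition pk_upd (pi : Pk) (f : F) (n : 'I_(bnd f)) : Pk :=
  @finfun F (fun g => 'I_(bnd g)) (@dfwith F (fun g => 'I_(bnd g)) (fun g => pi g) f n).

Inductive test : Type :=
  | TFalse : test
  | TTrue : test
  | TEq : forall f : F, 'I_(bnd f) -> test
  | TPar : test -> test -> test
  | TSeq : test -> test -> test
  | TNeg : test -> test.

Inductive prog : Type :=
  | PTest : test -> prog
  | PAsgn : forall f : F, 'I_(bnd f) -> prog
  | PPar : prog -> prog -> prog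
  | PSeq : prog -> prog -> prog
  | PChoice : prog -> prog -> forall r : rat, (0 <= r <= 1)%R -> prog
  | PStar : prog -> prog.

Fixpoint iterp (p : prog) (n : nat) : prog :=
  match n with
  | 0 => PTest TTrue
  | n'.+1 => PPar (PTest TTrue) (PSeq p (iterp p n'))
  end.

Variable R : realType.

(* (sub)distributions on 2^Pk, represented by their mass functions *)
Definition dist := {ffun {set Pk} -> R}.

Definition is_dist (mu : dist) : Prop :=
  (forall b, 0 <= mu b) /\ \sum_b mu b = 1.

Definition dmass (mu : dist) (A : {set {set Pk}}) : R := \sum_(b in A) mu b.

Definition ddirac (x : {set Pk}) : dist := [ffun y => (y == x)%:R].

Definition dmap (g : {set Pk} -> {set Pk}) (mu : dist) : dist :=
  [ffun y => \sum_(x | g x == y) mu x].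

Definition dunion (mu nu : dist) : dist :=
  [ffun c => \sum_x \sum_(y | x :|: y == c) mu x * nu y].

Definition dbind (g : {set Pk} -> dist) (mu : dist) : dist :=
  [ffun A => \sum_x g x A * mu x].

Definition dconv (r : R) (mu nu : dist) : dist :=
  [ffun A => r * mu A + (1 - r) * nu A].

Definition dle (mu nu : dist) : Prop :=
  forall c : {set Pk}, \sum_(b : {set Pk} | c \subset b) mu b <= \sum_(b : {set Pk} | c \subset b) nu b.

Definition is_dlub (ch : nat -> dist) (mu : dist) : Prop :=
  [/\ is_dist mu, (forall n, dle (ch n) mu) &
      forall nu, is_dist nu -> (forall n, dle (ch n) nu) -> dle mu nu].

Definition dlub (ch : nat -> dist) : dist :=
  epsilon (inhabits (ddirac (finset.set0 : {set Pk}))) (is_dlub ch).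

Fixpoint tsem (t : test) (a : {set Pk}) : dist :=
  match t with
  | TFalse => ddirac (finset.set0 : {set Pk})
  | TTrue => ddirac a
  | TEq f n => ddirac [set pi in a | pi f == n]
  | TPar t u => dunion (tsem t a) (tsem u a)
  | TSeq t u => dbind (tsem u) (tsem t a)
  | TNeg t => dmap (fun b => a :\: b) (tsem t a)
  end.

(* semantics of p^(n), given the semantics [f] of p *)
Fixpoint star_approx (f : {set Pk} -> dist) (n : nat) (a : {set Pk}) : dist :=
  match n with
  | 0 => ddirac a
  | n'.+1 => dunion (ddirac a) (dbind (star_approx f n') (f a))
  end.

Fixpoint sem (p : prog) : {set Pk} -> dist :=
  match p with
  | PTest t => tsem t
  | PAsgn f n => fun a => ddirac [set pk_upd pi n | pi in a]
  | PPar p q => fun a => dunion (sem p a) (sem q a)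
  | PSeq p q => fun a => dbind (sem q) (sem p a)
  | PChoice p q r _ => fun a => dconv (ratr r) (sem p a) (sem q a)
  | PStar p => let f := sem p in fun a => dlub (fun n => star_approx f n a)
  end.

End ProbNetKAT.

(* Main.v *)
Require Import Defs.
From HB Require Import structures.
From mathcomp Require Import all_boot all_order all_algebra.
From mathcomp Require Import all_classical all_reals all_analysis.
From Stdlib Require Import ClassicalEpsilon.
Import Order.TTheory GRing.Theory Num.Theory numFieldNormedType.Exports.
Local Open Scope classical_set_scope.
Local Open Scope ring_scope.

Lemma cvg_sumR {R : realType} (I : finType) (P : pred I) (u : nat -> I -> R) (l : I -> R) :
  (forall i, P i -> (fun n => u n i) @ \oo --> l i) ->
  (fun n => \sum_(i | P i) u n i) @ \oo --> \sum_(i | P i) l i.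
Proof.
move=> h; apply: cvg_big => //; first exact: add_continuous.
Qed.

Definition U {F : finType} {bnd : F -> nat} {R : realType} (mu : dist bnd R) (c : {set Pk bnd}) : R :=
  \sum_(b : {set Pk bnd} | c \subset b) mu b.

Lemma sup_ind {F : finType} {bnd : F -> nat} (P : {set Pk bnd} -> Prop) :
  (forall b : {set Pk bnd}, (forall d : {set Pk bnd}, b \proper d -> P d) -> P b) -> forall b, P b.
Proof.
move=> H.
suff: forall k b, (#|~: b| <= k)%N -> P b by move=> h b; exact: (h _ b (leqnn _)).
elim=> [|k IH] b hb; apply: H => d bd;
  have lt : (#|~: d| < #|~: b|)%N by apply: proper_card; rewrite properC.
  by move: (leq_trans lt hb); rewrite ltn0.
by apply: IH; rewrite -ltnS (leq_trans lt hb).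
Qed.

Section S.
Lemma U_split {F : finType} {bnd : F -> nat} {R : realType} (mu : dist bnd R) b :
  mu b = U mu b - \sum_(d : {set Pk bnd} | b \proper d) mu d.
Proof.
rewrite /U (bigD1 b) //=.
suff -> : \sum_(i : {set Pk bnd} | (b \subset i) && (i != b)) mu i = \sum_(d : {set Pk bnd} | b \proper d) mu d by rewrite addrK.
by apply: eq_bigl => d; rewrite finset.properEneq eq_sym andbC.
Qed.

Lemma U_inj {F : finType} {bnd : F -> nat} {R : realType} (mu nu : dist bnd R) :
  (forall c, U mu c = U nu c) -> mu = nu.
Proof.
move=> h; apply/ffunP; apply: sup_ind => b IH.
rewrite U_split [RHS]U_split h; congr (_ - _); apply: eq_bigr => d /IH //.
Qed.

Lemma U_ge0 {F : finType} {bnd : F -> nat} {R : realType} (mu : dist bnd R) c :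
  is_dist mu -> 0 <= U mu c.
Proof. by case=> h _; apply: sumr_ge0. Qed.

Lemma U_le1 {F : finType} {bnd : F -> nat} {R : realType} (mu : dist bnd R) c :
  is_dist mu -> U mu c <= 1.
Proof.
case=> h1 h2; rewrite -h2 /U [leRHS](bigID (fun b : {set Pk bnd} => c \subset b)) /= lerDl.
by apply: sumr_ge0.
Qed.

Lemma U_set0 {F : finType} {bnd : F -> nat} {R : realType} (mu : dist bnd R) :
  U mu finset.set0 = \sum_b mu b.
Proof. by apply: eq_bigl => b; rewrite finset.sub0set. Qed.

Lemma is_dist_dirac {F : finType} {bnd : F -> nat} {R : realType} (x : {set Pk bnd}) :
  is_dist (ddirac R x).
Proof.
split=> [b|]; first by rewrite ffunE ler0n.
rewrite (bigD1 x) //= big1 ?addr0 ?ffunE ?eqxx // => b /negbTE.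
by rewrite ffunE => ->.
Qed.

Lemma U_dirac {F : finType} {bnd : F -> nat} {R : realType} (a c : {set Pk bnd}) :
  U (ddirac R a) c = (c \subset a)%:R.
Proof.
rewrite /U; case: (boolP (c \subset a)) => ca.
  rewrite (bigD1 a) //= big1 ?addr0 ?ffunE ?eqxx // => b /andP[_ /negbTE].
  by rewrite ffunE => ->.
rewrite big1 // => b cb; rewrite ffunE; case: eqP => // ba.
by move: ca; rewrite -ba cb.
Qed.

Lemma dunion_diracE {F : finType} {bnd : F -> nat} {R : realType} (a : {set Pk bnd}) (nu : dist bnd R) b :
  dunion (ddirac R a) nu b = \sum_(y | a :|: y == b) nu y.
Proof.
rewrite ffunE (bigD1 a) //= [X in _ + X]big1 ?addr0.
  by apply: eq_bigr => y _; rewrite ffunE eqxx mul1r.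
move=> x /negbTE xa; apply: big1 => y _; by rewrite ffunE xa mul0r.
Qed.

Lemma U_dunion_dirac {F : finType} {bnd : F -> nat} {R : realType} (a : {set Pk bnd}) (nu : dist bnd R) c :
  U (dunion (ddirac R a) nu) c = U nu (c :\: a).
Proof.
symmetry.
rewrite /U (partition_big (fun y => a :|: y) (fun b => c \subset b)) /=; last first.
  by move=> y; rewrite subDset.
apply: eq_bigr => b cb; rewrite dunion_diracE; apply: eq_bigl => y.
move: cb; case: eqP => [<- cb|_ _]; by rewrite ?andbT ?andbF ?subDset.
Qed.

Lemma U_dbind {F : finType} {bnd : F -> nat} {R : realType} (g : {set Pk bnd} -> dist bnd R) mu c :
  U (dbind g mu) c = \sum_x mu x * U (g x) c.
Proof.
rewrite /U; under eq_bigr do rewrite ffunE.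
rewrite exchange_big; apply: eq_bigr => x _; rewrite mulr_sumr.
by apply: eq_bigr => b _; rewrite mulrC.
Qed.

Lemma is_dist_dbind {F : finType} {bnd : F -> nat} {R : realType} (g : {set Pk bnd} -> dist bnd R) mu :
  (forall x, is_dist (g x)) -> is_dist mu -> is_dist (dbind g mu).
Proof.
move=> hg hmu; split=> [A|].
  rewrite ffunE; apply: sumr_ge0 => x _; apply: mulr_ge0.
    exact: (proj1 (hg x)).
  exact: (proj1 hmu).
have := U_dbind g mu finset.set0; rewrite U_set0 => ->.
rewrite -(proj2 hmu); apply: eq_bigr => x _.
by rewrite U_set0 (proj2 (hg x)) mulr1.
Qed.

Lemma is_dist_dunion {F : finType} {bnd : F -> nat} {R : realType} (mu nu : dist bnd R) :
  is_dist mu -> is_dist nu -> is_dist (dunion mu nu).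
Proof.
move=> [m0 m1] [n0 n1]; split=> [c|].
  rewrite ffunE; apply: sumr_ge0 => x _; apply: sumr_ge0 => y _.
  exact: mulr_ge0.
under eq_bigr do rewrite ffunE.
rewrite exchange_big /=.
transitivity (\sum_x \sum_y mu x * nu y).
  apply: eq_bigr => x _.
  by rewrite [RHS](partition_big (fun y => x :|: y) predT).
rewrite -m1; apply: eq_bigr => x _; by rewrite -mulr_sumr n1 mulr1.
Qed.

Lemma is_dist_dmap {F : finType} {bnd : F -> nat} {R : realType} g (mu : dist bnd R) :
  is_dist mu -> is_dist (dmap g mu).
Proof.
move=> [m0 m1]; split=> [c|].
  by rewrite ffunE; apply: sumr_ge0.
under eq_bigr do rewrite ffunE.
by rewrite -m1 [RHS](partition_big g predT).
Qed.

Lemma is_dist_dconv {F : finType} {bnd : F -> nat} {R : realType} (r : R) (mu nu : dist bnd R) :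
  0 <= r <= 1 -> is_dist mu -> is_dist nu -> is_dist (dconv r mu nu).
Proof.
move=> /andP[r0 r1] [m0 m1] [n0 n1]; split=> [c|].
  rewrite ffunE; apply: addr_ge0; apply: mulr_ge0 => //.
  by rewrite subr_ge0.
under eq_bigr do rewrite ffunE.
by rewrite big_split /= -!mulr_sumr m1 n1 !mulr1 addrC subrK.
Qed.
End S.

Lemma star_dist {F : finType} {bnd : F -> nat} {R : realType} (f : {set Pk bnd} -> dist bnd R) :
  (forall a, is_dist (f a)) -> forall n a, is_dist (star_approx f n a).
Proof.
move=> hf; elim=> [|n IH] a /=; first exact: is_dist_dirac.
apply: is_dist_dunion; first exact: is_dist_dirac.
exact: is_dist_dbind.
Qed.

Lemma star_mono {F : finType} {bnd : F -> nat} {R : realType} (f : {set Pk bnd} -> dist bnd R) :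
  (forall a, is_dist (f a)) -> forall n a c,
  U (star_approx f n a) c <= U (star_approx f n.+1 a) c.
Proof.
move=> hf; elim=> [|n IH] a c.
  have hd : is_dist (dbind (star_approx f 0) (f a)).
    by apply: is_dist_dbind; [exact: star_dist | exact: hf].
  rewrite /= U_dunion_dirac U_dirac; case: (boolP (c \subset a)) => ca.
    have -> : c :\: a = finset.set0 by apply/eqP; rewrite finset.setD_eq0.
    by rewrite U_set0 (proj2 hd).
  exact: U_ge0.
rewrite [star_approx f n.+1 a]/= [star_approx f n.+2 a]/= !U_dunion_dirac !U_dbind.
apply: ler_sum => x _; apply: ler_wpM2l; [exact: (proj1 (hf a)) | exact: IH].
Qed.

Lemma star_lub {F : finType} {bnd : F -> nat} {R : realType} (f : {set Pk bnd} -> dist bnd R) a :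
  (forall a, is_dist (f a)) ->
  exists mu, is_dlub (fun n => star_approx f n a) mu /\
    forall b, (fun n => star_approx f n a b) @ \oo --> mu b.
Proof.
move=> hf.
pose ch n := star_approx f n a.
have Uhomo c : {homo (fun n => U (ch n) c) : n m / (n <= m)%N >-> n <= m}.
  by apply/nondecreasing_seqP => n; exact: star_mono.
have Ucvg c : cvgn (fun n => U (ch n) c).
  apply: nondecreasing_is_cvgn; first exact: Uhomo.
  exists 1 => _ [n _ <-]; apply: U_le1; exact: star_dist.
have chcvg : forall b, cvgn (fun n => ch n b).
  apply: sup_ind => b IH.
  have -> : (fun n => ch n b) = (fun n => U (ch n) b - \sum_(d : {set Pk bnd} | b \proper d) ch n d).
    by apply: funext => n; exact: U_split.
  apply/cvg_ex; eexists; apply: cvgB; first exact: Ucvg.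
  apply: (@cvg_sumR R _ _ (fun n d => ch n d) (fun d => limn (fun n => ch n d))) => d /IH //.
pose mu := [ffun b => limn (fun n => ch n b)].
have chto : forall b, (fun n => ch n b) @ \oo --> mu b by move=> b; rewrite ffunE; exact: chcvg.
have Uto c : (fun n => U (ch n) c) @ \oo --> U mu c by apply: cvg_sumR => b _; exact: chto.
exists mu; split => //; split.
- split=> [b|].
    rewrite ffunE; apply: limr_ge; first exact: chcvg.
    apply: nearW => n /=. exact: (proj1 (star_dist f hf n a) b).
  have h : (fun n => \sum_b ch n b) @ \oo --> \sum_b mu b by apply: cvg_sumR => b _; exact: chto.
  have e : (fun n => \sum_b ch n b) = (fun=> 1) by apply: funext => n; exact: (proj2 (star_dist f hf n a)).
  rewrite e in h; rewrite -(cvg_lim _ h) ?lim_cst //.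
- move=> n c; change (U (ch n) c <= U mu c); rewrite -(cvg_lim _ (Uto c)) //.
  exact: (nondecreasing_cvgn_le (Uhomo c) (Ucvg c)).
- move=> nu _ hnu c; change (U mu c <= U nu c); rewrite -(cvg_lim _ (Uto c)) //.
  apply: limr_le; first exact: Ucvg.
  by apply: nearW => n; exact: hnu.
Qed.

Lemma dlub_eq {F : finType} {bnd : F -> nat} {R : realType} (ch : nat -> dist bnd R) mu :
  is_dlub ch mu -> dlub ch = mu.
Proof.
move=> hmu.
have hnu : is_dlub ch (dlub ch).
  by rewrite /dlub; apply: epsilon_spec; exists mu.
case: hmu => [dm ubm lm]; case: hnu => [dn ubn ln].
apply: U_inj => c; apply/le_anti/andP; split.
  exact: (ln mu dm ubm c).
exact: (lm _ dn ubn c).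
Qed.

Lemma tsem_dist {F : finType} {bnd : F -> nat} {R : realType} (t : test bnd) a :
  is_dist (tsem R t a).
Proof.
elim: t a => [||f n|t IHt u IHu|t IHt u IHu|t IHt] a /=; try exact: is_dist_dirac.
- by apply: is_dist_dunion; [exact: IHt | exact: IHu].
- by apply: is_dist_dbind; [exact: IHu | exact: IHt].
- by apply: is_dist_dmap; exact: IHt.
Qed.

Lemma sem_dist {F : finType} {bnd : F -> nat} {R : realType} (p : prog bnd) a :
  is_dist (sem R p a).
Proof.
elim: p a => [t|f n|p IHp q IHq|p IHp q IHq|p IHp q IHq r hr|p IHp] a /=.
- exact: tsem_dist.
- exact: is_dist_dirac.
- by apply: is_dist_dunion; [exact: IHp | exact: IHq].
- by apply: is_dist_dbind; [exact: IHq | exact: IHp].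
- apply: is_dist_dconv; [|exact: IHp|exact: IHq]; case/andP: hr => r0 r1; apply/andP; split.
    by rewrite ler0q.
  by rewrite -(rmorph1 (@ratr R)) ler_rat.
- have [mu [hmu _]] := star_lub (sem R p) a IHp.
  by rewrite (dlub_eq _ _ hmu); case: hmu.
Qed.

Lemma iterp_sem {F : finType} {bnd : F -> nat} {R : realType} (p : prog bnd) n :
  sem R (iterp p n) = star_approx (sem R p) n.
Proof. by elim: n => [|n IH] //=; rewrite IH. Qed.

Theorem lemmaA2 (F : finType) (bnd : F -> nat) (R : realType)
    (p : prog bnd) (a : {set Pk bnd}) (A : {set {set Pk bnd}}) :
  (fun n => dmass (sem R (iterp p n) a) A) @ \oo --> dmass (sem R (PStar p) a) A.
Proof.
have [mu [hmu hto]] := star_lub (sem R p) a (@sem_dist _ _ R p).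
rewrite /= (dlub_eq _ _ hmu).
under eq_cvg do rewrite iterp_sem.
by apply: cvg_sumR => b _; exact: hto.
Qed.
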